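(* Let $G$ be a non-amenable discrete group and $\partial_F G$ its Furstenberg boundary. For every unital positive isometric $G$-equivariant embedding $\iota: C(\partial_F G)\to\ell^\infty(G)$, we have $\iota(C(\partial_F G))\cap c_0(G)=\{0\}$.
   Context: $\ell^\infty(G)$ carries the left translation action of $G$; $c_0(G)$ is the space of functions on $G$ vanishing at infinity. The Furstenberg boundary $\partial_F G$ is the universal $G$-boundary (minimal, strongly proximal compact $G$-space of which every $G$-boundary is a continuous equivariant image). *)

(* Defs.v *)
From mathcomp Require Import all_boot all_order all_algebra.
From mathcomp Require Import all_classical all_reals topology normedtype.
From mathcomp Require Import complex.
Import GRing.Theory Num.Theory numFieldTopology.Exports.

Set Implicit Arguments.
Unset Strict Implicit.
Unset Printing Implicit Defensive.

Local Open Scope ring_scope.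
Local Open Scope classical_set_scope.

Definition is_group (G : Type) (mul : G -> G -> G) (one : G) (inv : G -> G) :=
  [/\ forall a b c, mul a (mul b c) = mul (mul a b) c,
      forall a, mul one a = a,
      forall a, mul a one = a,
      forall a, mul (inv a) a = one &
      forall a, mul a (inv a) = one].

Section Defs.
Variable R : realType.
Variable G : Type.
Variables (mul : G -> G -> G) (one : G) (inv : G -> G).

Local Notation normc := (@Normc.normc R).

Definition rbounded (f : G -> R) := exists M : R, forall g, `|f g| <= M.

Definition linfty (phi : G -> R[i]) := exists M : R, forall g, normc (phi g) <= M.

Definition c0 (phi : G -> R[i]) :=
  forall e : R, 0 < e -> finite_set [set g | e <= normc (phi g)].

Definition amenable :=
  exists m : (G -> R) -> R,
    [/\ forall (a : R) f1 f2, rbounded f1 -> rbounded f2 ->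
          m (fun h => a * f1 h + f2 h) = a * m f1 + m f2,
        forall f, rbounded f -> (forall h, 0 <= f h) -> 0 <= m f,
        m (fun _ => 1) = 1 &
        forall g f, rbounded f -> m (fun h => f (mul (inv g) h)) = m f].

Section Space.
Variable X : topologicalType.

Definition is_action (act : G -> X -> X) :=
  [/\ forall x, act one x = x,
      forall g h x, act (mul g h) x = act g (act h x) &
      forall g, continuous (act g)].

Definition ccont (f : X -> R[i]) :=
  continuous (fun x => complex.Re (f x) : R) /\ continuous (fun x => complex.Im (f x) : R).

(* probability measures on the compact space X, viewed (Riesz) as states on
   C(X, R): positive unital linear functionals *)
Definition state (mu : (X -> R) -> R) :=
  [/\ forall (a : R) (f1 f2 : X -> R), continuous f1 -> continuous f2 ->
        mu (fun x => a * f1 x + f2 x) = a * mu f1 + mu f2,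
      forall f : X -> R, continuous f -> (forall x, 0 <= f x) -> 0 <= mu f &
      mu (fun _ => 1) = 1].

(* the point mass delta_x0 lies in the weak* closure of the orbit
   {g.mu | g in G}, where (g.mu)(f) = mu(f o g) *)
Definition dirac_in_orbit_closure (act : G -> X -> X) (mu : (X -> R) -> R) (x0 : X) :=
  forall (fs : seq (X -> R)) (e : R), (forall f : X -> R, f \in fs -> continuous f) -> 0 < e ->
    exists g : G, forall f, f \in fs -> `|mu (fun x => f (act g x)) - f x0| < e.

Definition G_boundary (act : G -> X -> X) :=
  [/\ compact [set: X], hausdorff_space X, inhabited X & is_action act] /\
  (forall x : X, closure [set act g x | g in [set: G]] = [set: X]) /\
  (forall mu, state mu -> exists x0 : X, dirac_in_orbit_closure act mu x0).
End Space.

Definition furstenberg_boundary (X : topologicalType) (act : G -> X -> X) :=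
  G_boundary act /\
  forall (Y : topologicalType) (actY : G -> Y -> Y), G_boundary actY ->
    exists p : X -> Y, [/\ continuous p, (forall y, exists x, p x = y) &
                          forall g x, p (act g x) = actY g (p x)].

Definition upi_equivariant_embedding (X : topologicalType) (act : G -> X -> X)
    (iota : (X -> R[i]) -> (G -> R[i])) :=
  (forall (a : R[i]) f1 f2, ccont f1 -> ccont f2 ->
        iota (fun x => a * f1 x + f2 x) = (fun g => a * iota f1 g + iota f2 g)) /\
  (forall f, ccont f -> linfty (iota f)) /\
  [/\
      iota (fun _ => 1) = (fun _ => 1),
      forall f, ccont f -> (forall x, 0 <= f x) -> forall g, 0 <= iota f g,
      (* isometric for the sup norms: same upper bounds for |f| and |iota f| *)
      forall f, ccont f -> forall r : R,
        (forall x, normc (f x) <= r) <-> (forall g, normc (iota f g) <= r) &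
      forall f, ccont f -> forall g,
        iota (fun x => f (act (inv g) x)) = (fun h => iota f (mul (inv g) h))].

End Defs.

(* Main.v *)
Require Import Defs.
From HB Require Import structures.
From mathcomp Require Import all_boot all_order all_algebra.
From mathcomp Require Import finmap.
From mathcomp Require Import all_classical all_reals topology normedtype.
From mathcomp Require Import complex.
From mathcomp Require Import lra.
Import GRing.Theory Num.Theory numFieldTopology.Exports.
Import Order.TTheory.
Local Open Scope ring_scope.
Local Open Scope classical_set_scope.

Lemma fin_amenable (R : realType) (G : Type) (mul : G -> G -> G) (one : G)
    (inv : G -> G) : is_group mul one inv -> finite_set [set: G] -> amenable R mul inv.
Proof.
move=> [hA h1l h1r hVl hVr] fin.
pose G' := {classic G}.
have fin' : finite_set [set: G'] := fin.
pose S (f : G -> R) := \sum_(g \in [set: G']) f g.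
pose N := S (fun _ => 1).
have SD a f1 f2 : S (fun h => a*f1 h + f2 h) = a * S f1 + S f2.
  by rewrite /S fsbig_split // mulr_fsumr.
have Npos : 0 < N.
  rewrite /N /S (fsbigD1 (one : G')) //=.
  apply: (Order.POrderTheory.lt_le_trans ltr01); rewrite lerDl; exact: fsumr_ge0.
have SI g f : S (fun h => f (mul (inv g) h)) = S f.
  rewrite /S [RHS](reindex_fsbigT (mul (inv g) : G' -> G')) //.
  exists (mul g) => h; by rewrite hA ?hVr ?hVl h1l.
exists (fun f => S f / N); split.
- by move=> a f1 f2 _ _; rewrite SD mulrDl mulrA.
- move=> f _ f0; apply: divr_ge0; last exact: ltW.
  exact: fsumr_ge0.
- by rewrite divff // gt_eqF.
- by move=> g f _; rewrite SI.
Qed.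

Definition ptd (X : topologicalType) (x : X) : Type := X.
Arguments ptd {X}.
HB.instance Definition _ (X : topologicalType) (x : X) := Topological.copy (ptd x) X.
HB.instance Definition _ (X : topologicalType) (x : X) := isPointed.Build (ptd x) x.

Lemma fincover (X : topologicalType) (x : X) (J : choiceType) (F : J -> set X) :
  compact [set: X] -> (forall i, open (F i)) -> (forall y, exists i, F i y) ->
  exists D : {fset J}, forall y, exists2 i, i \in D & F i y.
Proof.
move=> cpt Fo cov.
have cpt' : compact [set: ptd x] by exact: cpt.
rewrite compact_cover in cpt'.
have [D _ HD] := cpt' J [set: J] (F : J -> set (ptd x)) (fun i _ => Fo i)
  (fun y _ => let: ex_intro i h := cov y in ex_intro2 _ _ i Logic.I h).
exists D => y; have [i Di Fi] := HD y Logic.I; by exists i.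
Qed.

Lemma contD (R : realType) (X : topologicalType) (p q : X -> R) :
  continuous p -> continuous q -> continuous (fun x => p x + q x).
Proof. move=> hp hq x. exact: (@continuousD R R^o X p q x (hp x) (hq x)). Qed.
Arguments contD {R X p q}.
Lemma contM (R : realType) (X : topologicalType) (p q : X -> R) :
  continuous p -> continuous q -> continuous (fun x => p x * q x).
Proof. move=> hp hq x. exact: (@continuousM R X p q x (hp x) (hq x)). Qed.
Arguments contM {R X p q}.

Lemma minpos (R : realType) (T : eqType) (s : seq T) (d : T -> R) (e : R) :
  (forall t, t \in s -> 0 < d t) -> 0 < e ->
  exists e', [/\ 0 < e', e' <= e & forall t, t \in s -> e' <= d t].
Proof.
elim: s e => [|a s IH] e hd he; first by exists e; split.
have [|e' [h1 h2 h3]] := IH e _ he.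
  by move=> t ht; apply: hd; rewrite in_cons ht orbT.
have da := hd a (mem_head _ _).
exists (Num.min e' (d a)); split.
- by rewrite lt_min h1 da.
- by rewrite ge_min h2.
- move=> t; rewrite in_cons => /orP[/eqP->|ht]; rewrite ge_min ?lexx ?orbT //.
  by rewrite h3.
Qed.

Lemma nsq (R : realType) (z : R[i]) :
  Normc.normc z ^+ 2 = complex.Re z * complex.Re z + complex.Im z * complex.Im z.
Proof. by case: z => a b /=; rewrite sqr_sqrtr -?expr2 // addr_ge0 ?sqr_ge0. Qed.

Lemma normc_ge0' (R : realType) (z : R[i]) : 0 <= Normc.normc z.
Proof. case: z => a b /=; exact: sqrtr_ge0. Qed.
Arguments normc_ge0' {R}.
Arguments nsq {R}.

Theorem proposition3p10 (R : realType) (G : Type) (mul : G -> G -> G) (one : G)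
    (inv : G -> G) (hG : is_group mul one inv)
    (nonamen : ~ amenable R mul inv)
    (X : topologicalType) (act : G -> X -> X)
    (hX : furstenberg_boundary R mul one act)
    (iota : (X -> R[i]) -> (G -> R[i]))
    (hiota : upi_equivariant_embedding mul inv act iota) :
  forall f : X -> R[i], ccont f -> c0 (iota f) -> iota f = (fun _ => 0).
Proof.
move=> f fc fc0.
have hG0 := hG.
case: hG => [hA h1l h1r hVl hVr].
have invK a : inv (inv a) = a.
  by rewrite -[inv (inv a)]h1r -(hVl a) hA hVl h1l.
have mulKg a b : mul (inv a) (mul a b) = b by rewrite hA hVl h1l.
case: hiota => [hlin [hbdd [h1 hpos hiso heq]]].
case: hX => [[[Xcpt Xhaus [xi] hact] [Xmin Xprox]] _].
case: hact => [act1 actM actc].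
pose lift (phi : X -> R) := fun x => (phi x)%:C%C.
have cc (z : R[i]) : ccont (fun _ : X => z) by split; exact: cst_continuous.
have iota0 : iota (fun _ => 0) = fun _ => 0.
  have E : (fun x : X => -1 * (1:R[i]) + 1) = (fun _ => 0).
    by apply: funext => x; rewrite mulN1r addNr.
  have := hlin (-1) (fun _ => 1) (fun _ => 1) (cc _) (cc _).
  rewrite E h1 => ->; apply: funext => g; by rewrite mulN1r addNr.
have iotac (z : R[i]) : iota (fun _ => z) = fun _ => z.
  have := hlin z (fun _ => 1) (fun _ => 0) (cc _) (cc _).
  have -> : (fun x : X => z * (1:R[i]) + 0) = (fun _ => z) by apply: funext => x; rewrite mulr1 addr0.
  move=> ->; apply: funext => g; by rewrite h1 iota0 mulr1 addr0.
have liftc phi : continuous phi -> ccont (lift phi).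
  by move=> phic; split => //=; exact: cst_continuous.
have realI phi : continuous phi -> forall g, complex.Im (iota (lift phi) g) = 0.
  move=> phic g.
  have [M hM] := hbdd _ (liftc _ phic).
  have hM' := (proj2 (hiso _ (liftc _ phic) M) hM).
  have phiM x : 0 <= phi x + M.
    have := hM' x; rewrite /lift /= expr0n /= addr0 sqrtr_sqr => h.
    move: h; rewrite ler_norml => /andP[h _]; lra.
  have E : lift (fun x => phi x + M) = (fun x => 1 * lift phi x + M%:C%C).
    apply: funext => x; rewrite mul1r /lift; by simpc.
  have P := hpos _ (liftc _ (contD phic (@cst_continuous _ _ M))).
  have /P/(_ g) : forall x, 0 <= lift (fun x => phi x + M) x.
    by move=> x; rewrite /lift lecE /= eqxx phiM.
  rewrite E hlin //; last exact: liftc.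
  rewrite (iotac (M%:C)%C).
  case: (iota (lift phi) g) => a b; rewrite lecE /=.
  by move=> /andP[/eqP h _]; move: h; rewrite mul0r mul1r !addr0.
pose Rg (phi : X -> R) (g : G) := complex.Re (iota (lift phi) g).
have decomp h (hc : ccont h) g :
   complex.Re (iota h g) = Rg (fun x => complex.Re (h x)) g /\
   complex.Im (iota h g) = Rg (fun x => complex.Im (h x)) g.
  case: (hc) => cre cim.
  have E : iota h = fun g => 'i%C * iota (lift (fun x => complex.Im (h x))) g
                             + iota (lift (fun x => complex.Re (h x))) g.
    rewrite -hlin; [|exact: liftc|exact: liftc].
    congr iota; apply: funext => x; rewrite /lift addrC; exact: complexE.
  rewrite E /Rg; have r1 := realI _ cim g; have r2 := realI _ cre g; move: r1 r2.
  case: (iota (lift (fun x => complex.Im (h x))) g) => a b.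
  case: (iota (lift (fun x => complex.Re (h x))) g) => c d /= -> ->.
  by split; lra.
have Req phi (phic : continuous phi) k h : Rg (fun x => phi (act k x)) h = Rg phi (mul k h).
  have := heq (lift phi) (liftc _ phic) (inv k); rewrite invK => E.
  rewrite /Rg /lift; rewrite /lift in E; by rewrite E.
pose mu (phi : X -> R) := Rg phi one.
have Hstate : state mu.
  split.
  - move=> a f1 f2 c1 c2; rewrite /mu /Rg.
    have -> : lift (fun x => a * f1 x + f2 x) = fun x => a%:C%C * lift f1 x + lift f2 x.
      by apply: funext => x; rewrite /lift rmorphD rmorphM.
    rewrite hlin; [|exact: liftc|exact: liftc].
    have := realI _ c1 one; case: (iota (lift f1) one) => u v /= ->.
    case: (iota (lift f2) one) => p q /=; lra.
  - move=> phi phic phi0; rewrite /mu /Rg.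
    have Hp : forall x, 0 <= lift phi x by move=> x; rewrite /lift lecE /= eqxx phi0.
    have := hpos _ (liftc _ phic) Hp one.
    by case: (iota _ one) => u v; rewrite lecE /= => /andP[].
  - rewrite /mu /Rg; have -> : lift (fun _ => 1) = fun _ => 1 by apply: funext.
    by rewrite h1.
have [x0 prox] := Xprox mu Hstate.
have prox' (fs : seq (X -> R)) (e : R) :
    (forall phi, phi \in fs -> continuous phi) -> 0 < e ->
    exists h, forall phi, phi \in fs -> `|Rg phi h - phi x0| < e.
  move=> fsc e0; have [h hh] := prox fs e fsc e0.
  exists h => phi phin; have := hh phi phin.
  by rewrite /mu Req ?h1r //; exact: fsc.
case: (pselect (forall x, Normc.normc (f x) <= 0)) => [H0|Hn].
  apply: funext => g; have := proj1 (hiso f fc 0) H0 g.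
  case: (iota f g) => a b /= hz.
  have : Num.sqrt (a ^+ 2 + b ^+ 2) == 0 by rewrite eq_le hz sqrtr_ge0.
  rewrite sqrtr_eq0 => hab.
  have ha : a = 0 by nra.
  have hb : b = 0 by nra.
  by rewrite ha hb.
have [x1 hx1] : exists x1, 0 < Normc.normc (f x1).
  have [x1 hx1] := (existsNP _).2 Hn; exists x1.
  by rewrite ltNge; apply/negP.
set c := Normc.normc (f x1) in hx1.
case: (fc) => cre cim.
pose qf x := complex.Re (f x) * complex.Re (f x) + complex.Im (f x) * complex.Im (f x).
have qfc : continuous qf by exact: contD (contM cre cre) (contM cim cim).
pose O := qf @^-1` `]c ^+ 2 / 4, +oo[.
have Oopen : open O by apply: open_comp => // y _; exact: qfc.
have Oin x : O x = (c ^+ 2 / 4 < qf x) by rewrite /O /= in_itv /= andbT.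
have Ox1 : O x1.
  rewrite Oin /qf -nsq -/c; have := mulr_gt0 hx1 hx1; rewrite -expr2; lra.
have cov y : exists k : {classic G}, (act k @^-1` O) y.
  have cl : closure [set act g y | g in [set: G]] x1 by rewrite Xmin.
  have [z [[k _ <-] Oz]] := cl O (open_nbhs_nbhs (conj Oopen Ox1)).
  by exists k.
have [D hD] := @fincover X xi {classic G} (fun k : {classic G} => act k @^-1` O) Xcpt
  (fun k => open_comp (fun y _ => actc k y) Oopen) cov.
have c4 : 0 < c / 4 by lra.
pose T := [set h : G | c / 4 <= Normc.normc (iota f h)].
have Tfin : finite_set T := fc0 (c / 4) c4.
have Tin h : (c / 4) ^+ 2 <= complex.Re (iota f h) * complex.Re (iota f h)
     + complex.Im (iota f h) * complex.Im (iota f h) -> T h.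
  rewrite -nsq /T /= => hq; have := normc_ge0' (iota f h); nra.
have est (a b A B e : R) : `|a - A| < e -> `|b - B| < e -> e <= c / 8 ->
    c ^+ 2 / 4 < A * A + B * B -> (c / 4) ^+ 2 <= a * a + b * b.
  rewrite !ltr_norml => /andP[ha1 ha2] /andP[hb1 hb2] he hAB.
  have e0 : 0 < e by lra.
  have h1' : A * A <= 2 * (a * a) + 2 * ((a - A) * (a - A)).
    by have := sqr_ge0 (2 * a - A); rewrite expr2; nra.
  have h2' : B * B <= 2 * (b * b) + 2 * ((b - B) * (b - B)).
    by have := sqr_ge0 (2 * b - B); rewrite expr2; nra.
  have h3 : (a - A) * (a - A) <= e * e by nra.
  have h4 : (b - B) * (b - B) <= e * e by nra.
  have h5 : e * e <= (c / 8) * (c / 8) by nra.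
  rewrite expr2 -expr2 in hAB *; rewrite expr2.
  nra.
pose T' : set {classic G} := [set h | exists2 k, k \in D & T (mul k h)].
have T'fin : finite_set T'.
  apply: (sub_finite_set (B := \bigcup_(k in [set` D]) ((mul (inv k) : {classic G} -> {classic G}) @` T))).
    by move=> h [k kD Tk]; exists k => //; exists (mul k h) => //; exact: mulKg.
  apply: bigcup_finite; first exact: finite_fset.
  by move=> k _; exact: finite_image.
have [t ht] : exists t, forall phi, continuous phi -> Rg phi t = phi x0.
  apply: contrapT => Hno.
  have Hp : forall t : {classic G}, exists phi : X -> R,
      T' t -> continuous phi /\ Rg phi t != phi x0.
    move=> t; case: (pselect (T' t)) => Tt; last by exists (fun=> 0).
    have : ~ (forall phi, continuous phi -> Rg phi t = phi x0).
      by move=> H; apply: Hno; exists t.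
    move=> /(existsNP _).2 [phi] /not_implyP [phic] /eqP ne.
    by exists phi.
  have [pick hpick] := choice Hp.
  pose ts := fset_set T'.
  have memts t : (t \in ts) = `[< T' t >].
    by rewrite /ts in_fset_set // inE.
  pose d t := `|Rg (pick t) t - pick t x0|.
  have [e' [e'0 e'c e'd]] : exists e', [/\ 0 < e', e' <= c / 8 &
                 forall t, t \in (ts : seq _) -> e' <= d t].
    apply: minpos; last by lra.
    move=> t; rewrite memts => /asboolP Tt.
    by rewrite normr_gt0 subr_eq0; case: (hpick t Tt).
  pose fs := [seq pick t | t <- (ts : seq _)] ++
     ([seq (fun x => complex.Re (f (act k x))) | k : {classic G} <- (D : seq _)] ++
      [seq (fun x => complex.Im (f (act k x))) | k : {classic G} <- (D : seq _)]).
  have fsc : forall phi, phi \in fs -> continuous phi.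
    move=> phi; rewrite mem_cat => /orP[|].
      move=> /mapP[t tin ->]; move: tin; rewrite memts => /asboolP Tt.
      by case: (hpick t Tt).
    rewrite mem_cat => /orP[|].
      move=> /mapP[k kD ->] y.
      exact: (continuous_comp (actc k y) (cre _)).
    move=> /mapP[k kD ->] y.
    exact: (continuous_comp (actc k y) (cim _)).
  have [h hh] := prox' fs e' fsc e'0.
  have [k kD Ok] := hD x0.
  have mre : (fun x => complex.Re (f (act k x))) \in fs.
    by rewrite !mem_cat; apply/orP; right; apply/orP; left; apply/mapP; exists k.
  have mim : (fun x => complex.Im (f (act k x))) \in fs.
    by rewrite !mem_cat; apply/orP; right; apply/orP; right; apply/mapP; exists k.
  have hre := hh _ mre; have him := hh _ mim.
  rewrite /= (Req _ cre) -(proj1 (decomp f fc _)) in hre.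
  rewrite /= (Req _ cim) -(proj2 (decomp f fc _)) in him.
  have Okq : c ^+ 2 / 4 < qf (act k x0) by rewrite -Oin.
  have Tkh : T (mul k h) by apply: Tin; exact: (est _ _ _ _ _ hre him e'c Okq).
  have hts : h \in (ts : seq _) by rewrite memts; apply/asboolP; exists k.
  have mp : pick h \in fs by rewrite mem_cat; apply/orP; left; apply/mapP; exists h.
  by have := hh _ mp; rewrite ltNge (e'd _ hts).
exfalso; apply: nonamen; apply: (@fin_amenable R G mul one inv hG0).
apply: (sub_finite_set (B := \bigcup_(k in [set` D])
   ((fun y => mul (inv k) (mul y (inv t))) @` T))); last first.
  apply: bigcup_finite; first exact: finite_fset.
  by move=> k _; exact: finite_image.
move=> g _; have [k kD Ok] := hD (act g x0).
rewrite /= -actM in Ok.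
exists k => //; exists (mul (mul k g) t); last by rewrite -hA hVr h1r mulKg.
apply: Tin.
have [-> ->] := decomp f fc (mul (mul k g) t).
rewrite -!Req // !ht; last first.
- move=> y; exact: (continuous_comp (actc _ y) (cre _)).
- move=> y; exact: (continuous_comp (actc _ y) (cim _)).
move: Ok; rewrite Oin /qf => Ok.
have : 0 <= c by lra.
rewrite expr2 in Ok *; nra.
Qed.
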